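(* Let $\mathcal C$ be a semi-abelian category, $\partial\colon X\to B$ a regular epimorphism, and $\xi\colon B\flat X\to X$ an internal action such that $\xi\circ(\partial\flat 1_X)=\chi_X$. Then $(\partial,\xi)$ satisfies both the Precrossed Module Condition $[\partial,1_B]_\xi=0$ and the Peiffer Condition $[k,e\circ\partial]_{\chi_X}=0$; in particular $(\partial,\xi)$ is an internal precrossed module, and it satisfies $\partial\circ\xi=\chi_B\circ(1_B\flat\partial)$.
   Context: In a semi-abelian category, for objects $B,X$ let $\kappa_{B,X}\colon B\flat X\to B+X$ be the kernel of $\langle 1_B,0\rangle\colon B+X\to B$; $\flat$ is a bifunctor with $g\flat f$ the restriction of $g+f$. An internal action $\xi\colon B\flat X\to X$ (satisfying the standard Bourn–Janelidze axioms) induces via the semi-direct product construction a split short exact sequence $0\to X\xrightarrow{k}X\rtimes_\xi B\xrightarrow{d}B\to0$ with section $e$. The conjugation action of an object $Y$ on itself is $\chi_Y=\langle1_Y,1_Y\rangle\circ\kappa_{Y,Y}$, corresponding to the split short exact sequence $Y\xrightarrow{(1_Y,0)}Y\times Y\xrightarrow{\pi_2}Y$ with section $\Delta_Y$. For an action $\xi$ with sequence $(k,d,e)$ and $f\colon X\to Y$, $g\colon B\to Y$, the $\xi$-commutator $[f,g]_\xi\le Y$ is the regular image of $\langle f,g\rangle\circ\kappa$ where $\kappa$ is the kernel of $\langle k,e\rangle\colon X+B\to X\rtimes_\xi B$. $(\partial,\xi)$ is an internal precrossed module if there is $c\colon X\rtimes_\xi B\to B$ with $c\circ e=1_B$ and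 $c\circ k=\partial$. *)

(* Defs.v *)
Set Implicit Arguments.
Unset Strict Implicit.

Record Category := {
  ob :> Type;
  hom : ob -> ob -> Type;
  comp : forall a b c : ob, hom b c -> hom a b -> hom a c;
  idm : forall a : ob, hom a a;
  comp_assoc : forall (a b c d : ob) (h : hom c d) (g : hom b c) (f : hom a b),
      comp h (comp g f) = comp (comp h g) f;
  comp_id_l : forall (a b : ob) (f : hom a b), comp (idm b) f = f;
  comp_id_r : forall (a b : ob) (f : hom a b), comp f (idm a) = f
}.
Arguments hom {C} _ _ : rename.
Arguments comp {C a b c} _ _ : rename.
Arguments idm {C} a : rename.

Notation "g ∘ f" := (comp g f) (at level 40, left associativity).

Section CatDefs.
Variable C : Category.

Definition is_mono {a b : C} (m : hom a b) : Prop :=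
  forall (t : C) (x y : hom t a), m ∘ x = m ∘ y -> x = y.

Definition is_iso {a b : C} (f : hom a b) : Prop :=
  exists g : hom b a, g ∘ f = idm a /\ f ∘ g = idm b.

Definition is_zero_object (z : C) : Prop :=
  (forall a : C, exists! f : hom a z, True) /\ (forall a : C, exists! f : hom z a, True).

Definition is_pullback {a b c P : C} (f : hom a c) (g : hom b c)
    (p1 : hom P a) (p2 : hom P b) : Prop :=
  f ∘ p1 = g ∘ p2 /\
  forall (Q : C) (q1 : hom Q a) (q2 : hom Q b), f ∘ q1 = g ∘ q2 ->
    exists! h : hom Q P, p1 ∘ h = q1 /\ p2 ∘ h = q2.

Definition is_kernel_pair {a b R : C} (f : hom a b) (r1 r2 : hom R a) : Prop :=
  is_pullback f f r1 r2.

Definition is_coequalizer {a b c : C} (f g : hom a b) (q : hom b c) : Prop :=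
  q ∘ f = q ∘ g /\
  forall (d : C) (h : hom b d), h ∘ f = h ∘ g -> exists! u : hom c d, u ∘ q = h.

Definition is_regular_epi {b c : C} (q : hom b c) : Prop :=
  exists (a : C) (f g : hom a b), is_coequalizer f g q.

Definition is_equiv_rel {R A : C} (r1 r2 : hom R A) : Prop :=
  (forall (t : C) (x y : hom t R), r1 ∘ x = r1 ∘ y -> r2 ∘ x = r2 ∘ y -> x = y) /\
  (exists d : hom A R, r1 ∘ d = idm A /\ r2 ∘ d = idm A) /\
  (exists s : hom R R, r1 ∘ s = r2 /\ r2 ∘ s = r1) /\
  (forall (P : C) (p1 p2 : hom P R), is_pullback r2 r1 p1 p2 ->
     exists t : hom P R, r1 ∘ t = r1 ∘ p1 /\ r2 ∘ t = r2 ∘ p2).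

End CatDefs.

Record PCat := {
  pc_cat :> Category;
  zob : pc_cat;
  to_zero : forall a : pc_cat, hom a zob;
  from_zero : forall a : pc_cat, hom zob a;
  to_zero_uniq : forall (a : pc_cat) (f : hom a zob), f = to_zero a;
  from_zero_uniq : forall (a : pc_cat) (f : hom zob a), f = from_zero a;
  prod : pc_cat -> pc_cat -> pc_cat;
  pr1 : forall a b : pc_cat, hom (prod a b) a;
  pr2 : forall a b : pc_cat, hom (prod a b) b;
  pair : forall (t a b : pc_cat), hom t a -> hom t b -> hom t (prod a b);
  pair_pr1 : forall t a b (f : hom t a) (g : hom t b), pr1 a b ∘ pair f g = f;
  pair_pr2 : forall t a b (f : hom t a) (g : hom t b), pr2 a b ∘ pair f g = g;
  pair_uniq : forall t a b (h : hom t (prod a b)),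
      h = pair (pr1 a b ∘ h) (pr2 a b ∘ h);
  coprod : pc_cat -> pc_cat -> pc_cat;
  inl : forall a b : pc_cat, hom a (coprod a b);
  inr : forall a b : pc_cat, hom b (coprod a b);
  copair : forall (a b t : pc_cat), hom a t -> hom b t -> hom (coprod a b) t;
  copair_inl : forall a b t (f : hom a t) (g : hom b t), copair f g ∘ inl a b = f;
  copair_inr : forall a b t (f : hom a t) (g : hom b t), copair f g ∘ inr a b = g;
  copair_uniq : forall a b t (h : hom (coprod a b) t),
      h = copair (h ∘ inl a b) (h ∘ inr a b);
  ker : forall a b : pc_cat, hom a b -> pc_cat;
  kerm : forall (a b : pc_cat) (f : hom a b), hom (ker f) a;
  kerm_zero : forall a b (f : hom a b), f ∘ kerm f = from_zero b ∘ to_zero (ker f);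
  ker_lift : forall (a b : pc_cat) (f : hom a b) (t : pc_cat) (g : hom t a),
      f ∘ g = from_zero b ∘ to_zero t -> hom t (ker f);
  ker_lift_spec : forall a b (f : hom a b) t (g : hom t a) (H : f ∘ g = from_zero b ∘ to_zero t),
      kerm f ∘ ker_lift H = g;
  kerm_mono : forall a b (f : hom a b), is_mono (kerm f)
}.
Arguments zob {p}.
Arguments to_zero {p} a.
Arguments from_zero {p} a.
Arguments prod {p} _ _.
Arguments coprod {p} _ _.
Arguments pr1 {p} a b.
Arguments pr2 {p} a b.
Arguments pair {p t a b} _ _.
Arguments inl {p} a b.
Arguments inr {p} a b.
Arguments copair {p a b t} _ _.
Arguments ker {p a b} _.
Arguments kerm {p a b} _.
Arguments ker_lift {p a b f t g} _.

Section PDefs.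
Variable C : PCat.

Definition zmor (a b : C) : hom a b := from_zero b ∘ to_zero a.

Definition is_kernel {K A B : C} (k : hom K A) (f : hom A B) : Prop :=
  f ∘ k = zmor K B /\
  forall (t : C) (g : hom t A), f ∘ g = zmor t B -> exists! h : hom t K, k ∘ h = g.

Definition coprod_map {B B' X X' : C} (g : hom B B') (f : hom X X') :
  hom (coprod B X) (coprod B' X') := copair (inl B' X' ∘ g) (inr B' X' ∘ f).

Definition proj_act (B X : C) : hom (coprod B X) B := copair (idm B) (zmor X B).

Definition flat (B X : C) : C := ker (proj_act B X).
Definition kappa (B X : C) : hom (flat B X) (coprod B X) := kerm (proj_act B X).

Lemma zmor_comp_l (a b c : C) (h : hom b c) : h ∘ zmor a b = zmor a c.
Proof.
  unfold zmor. rewrite comp_assoc. f_equal. apply from_zero_uniq.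
Qed.

Lemma zmor_comp_r (a b c : C) (h : hom a b) : zmor b c ∘ h = zmor a c.
Proof.
  unfold zmor. rewrite <- comp_assoc. f_equal. apply to_zero_uniq.
Qed.

Lemma comp_copair (a b t s : C) (f : hom a t) (g : hom b t) (h : hom t s) :
  h ∘ copair f g = copair (h ∘ f) (h ∘ g).
Proof.
  rewrite (copair_uniq (h ∘ copair f g)).
  rewrite <- !comp_assoc, copair_inl, copair_inr. reflexivity.
Qed.

Lemma copair_comp_map (B B' X X' T : C) (g : hom B B') (f : hom X X')
  (u : hom B' T) (v : hom X' T) :
  copair u v ∘ coprod_map g f = copair (u ∘ g) (v ∘ f).
Proof.
  unfold coprod_map. rewrite comp_copair, !comp_assoc, copair_inl, copair_inr.
  reflexivity.
Qed.

Lemma flat_map_ok (B B' X X' : C) (g : hom B B') (f : hom X X') :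
  proj_act B' X' ∘ (coprod_map g f ∘ kappa B X) = zmor (flat B X) B'.
Proof.
  unfold proj_act, kappa.
  rewrite comp_assoc, copair_comp_map, comp_id_l, zmor_comp_r.
  assert (E : copair g (zmor X B') = g ∘ copair (idm B) (zmor X B)).
  { rewrite comp_copair, comp_id_r, zmor_comp_l. reflexivity. }
  rewrite E, <- comp_assoc. change (copair (idm B) (zmor X B)) with (proj_act B X).
  unfold flat. rewrite kerm_zero. exact (zmor_comp_l _ g).
Qed.

Definition flat_map {B B' X X' : C} (g : hom B B') (f : hom X X') :
  hom (flat B X) (flat B' X') := ker_lift (flat_map_ok g f).

Lemma eta_ok (B X : C) : proj_act B X ∘ inr B X = zmor X B.
Proof. unfold proj_act. apply copair_inr. Qed.

Definition act_eta (B X : C) : hom X (flat B X) := ker_lift (eta_ok B X).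

Lemma mu_ok (B X : C) :
  proj_act B X ∘ (copair (inl B X) (kappa B X) ∘ kappa B (flat B X))
  = zmor (flat B (flat B X)) B.
Proof.
  rewrite comp_assoc, comp_copair.
  unfold proj_act at 1. rewrite copair_inl.
  unfold kappa, flat. rewrite kerm_zero. fold (zmor (ker (proj_act B X)) B).
  change (copair (idm B) (zmor (ker (proj_act B X)) B)) with (proj_act B (ker (proj_act B X))).
  rewrite kerm_zero. reflexivity.
Qed.

Definition act_mu (B X : C) : hom (flat B (flat B X)) (flat B X) := ker_lift (mu_ok B X).

(* internal action (Bourn-Janelidze axioms: algebra for the monad B ♭ (-)) *)
Definition is_internal_action {B X : C} (xi : hom (flat B X) X) : Prop :=
  xi ∘ act_eta B X = idm X /\ xi ∘ act_mu B X = xi ∘ flat_map (idm B) xi.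

Definition chi (Y : C) : hom (flat Y Y) Y := copair (idm Y) (idm Y) ∘ kappa Y Y.

(* (k, d, e) : 0 -> X -> A -> B -> 0 is a split short exact sequence whose
   associated action is xi (i.e. A is (isomorphic to) the semidirect product
   X ⋊_xi B, with its canonical k, d, e). *)
Definition is_semidirect_product {B X A : C} (xi : hom (flat B X) X)
    (k : hom X A) (d : hom A B) (e : hom B A) : Prop :=
  is_kernel k d /\ d ∘ e = idm B /\ k ∘ xi = copair e k ∘ kappa B X.

Definition image_is_zero {a b : C} (phi : hom a b) : Prop :=
  forall (I : C) (q : hom a I) (m : hom I b),
    is_regular_epi q -> is_mono m -> m ∘ q = phi -> is_zero_object I.

Definition commutator_zero {X B A Y : C} (k : hom X A) (e : hom B A)
    (f : hom X Y) (g : hom B Y) : Prop :=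
  image_is_zero (copair f g ∘ kerm (copair k e)).

(* sequence of the conjugation action chi_Y : Y -(1,0)-> Y x Y -pi2-> Y, section Delta *)
Definition conj_k (Y : C) : hom Y (prod Y Y) := pair (idm Y) (zmor Y Y).
Definition conj_e (Y : C) : hom Y (prod Y Y) := pair (idm Y) (idm Y).

Definition is_precrossed_module {B X A : C} (partial : hom X B)
    (k : hom X A) (e : hom B A) : Prop :=
  exists c : hom A B, c ∘ e = idm B /\ c ∘ k = partial.

(* finite limits: zero (terminal) object, binary products, kernels (chosen)
   and pullbacks *)
Definition has_pullbacks : Prop :=
  forall (a b c : C) (f : hom a c) (g : hom b c),
    exists (P : C) (p1 : hom P a) (p2 : hom P b), is_pullback f g p1 p2.

Definition is_regular : Prop :=
  has_pullbacks /\
  (forall (a b R : C) (f : hom a b) (r1 r2 : hom R a), is_kernel_pair f r1 r2 ->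
     exists (c : C) (q : hom a c), is_coequalizer r1 r2 q) /\
  (forall (a b c P : C) (f : hom a c) (g : hom b c) (p1 : hom P a) (p2 : hom P b),
     is_pullback f g p1 p2 -> is_regular_epi g -> is_regular_epi p1).

Definition is_exact : Prop :=
  is_regular /\
  forall (R A : C) (r1 r2 : hom R A), is_equiv_rel r1 r2 ->
    exists (b : C) (f : hom A b), is_kernel_pair f r1 r2.

(* protomodularity (pointed form: split short five lemma) *)
Definition is_protomodular : Prop :=
  forall (K A B K' A' B' : C) (k : hom K A) (d : hom A B) (e : hom B A)
         (k' : hom K' A') (d' : hom A' B') (e' : hom B' A')
         (u : hom K K') (v : hom A A') (w : hom B B'),
    is_kernel k d -> d ∘ e = idm B ->
    is_kernel k' d' -> d' ∘ e' = idm B' ->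
    v ∘ k = k' ∘ u -> d' ∘ v = w ∘ d -> v ∘ e = e' ∘ w ->
    is_iso u -> is_iso w -> is_iso v.

End PDefs.

Record SemiAbelianCategory := {
  sa_pcat :> PCat;
  sa_exact : is_exact sa_pcat;
  sa_protomodular : is_protomodular sa_pcat
}.

(* Main.v *)
Require Import Defs.
Set Implicit Arguments.
Unset Strict Implicit.

Section Basics.
Variable C : PCat.

Lemma kerm_is_kernel (a b : C) (f : hom a b) : is_kernel (kerm f) f.
Proof.
  split. { exact (kerm_zero f). }
  intros t g H. exists (ker_lift H). split. { apply ker_lift_spec. }
  intros h' Hh'. apply kerm_mono. rewrite ker_lift_spec. symmetry; exact Hh'.
Qed.

Lemma kernel_mono (K A B : C) (k : hom K A) (d : hom A B) : is_kernel k d -> is_mono k.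
Proof.
  intros [H0 H] t x y Exy.
  assert (Z : d ∘ (k ∘ x) = zmor t B).
  { rewrite comp_assoc, H0. apply zmor_comp_r. }
  destruct (H t (k ∘ x) Z) as [h [_ U]].
  rewrite <- (U x eq_refl), <- (U y (eq_sym Exy)). reflexivity.
Qed.

Lemma kernel_zero (K A B : C) (k : hom K A) (d : hom A B) : is_kernel k d -> d ∘ k = zmor K B.
Proof. intros [H _]; exact H. Qed.

Lemma kernel_lift (K A B : C) (k : hom K A) (d : hom A B) (t : C) (g : hom t A) :
  is_kernel k d -> d ∘ g = zmor t B -> exists h : hom t K, k ∘ h = g.
Proof. intros [_ H] Hg. destruct (H t g Hg) as [h [Hh _]]. exists h; exact Hh. Qed.

Lemma pb_uniq (a b c P : C) (f : hom a c) (g : hom b c) (p1 : hom P a) (p2 : hom P b)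
  (Q : C) (x y : hom Q P) :
  is_pullback f g p1 p2 -> p1 ∘ x = p1 ∘ y -> p2 ∘ x = p2 ∘ y -> x = y.
Proof.
  intros [Hc H] E1 E2.
  assert (Z : f ∘ (p1 ∘ x) = g ∘ (p2 ∘ x)). { rewrite !comp_assoc, Hc. reflexivity. }
  destruct (H Q (p1 ∘ x) (p2 ∘ x) Z) as [h [_ U]].
  rewrite <- (U x (conj eq_refl eq_refl)), <- (U y (conj (eq_sym E1) (eq_sym E2))).
  reflexivity.
Qed.

Lemma pb_lift (a b c P : C) (f : hom a c) (g : hom b c) (p1 : hom P a) (p2 : hom P b)
  (Q : C) (q1 : hom Q a) (q2 : hom Q b) :
  is_pullback f g p1 p2 -> f ∘ q1 = g ∘ q2 -> exists h : hom Q P, p1 ∘ h = q1 /\ p2 ∘ h = q2.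
Proof. intros [_ H] E. destruct (H Q q1 q2 E) as [h [Hh _]]. exists h; exact Hh. Qed.

Lemma regepi_epi (b c : C) (q : hom b c) (t : C) (x y : hom c t) :
  is_regular_epi q -> x ∘ q = y ∘ q -> x = y.
Proof.
  intros [a [f [g [Hc H]]]] E.
  assert (Z : (x ∘ q) ∘ f = (x ∘ q) ∘ g). { rewrite <- !comp_assoc, Hc. reflexivity. }
  destruct (H t (x ∘ q) Z) as [u [_ U]].
  rewrite <- (U x eq_refl), <- (U y (eq_sym E)). reflexivity.
Qed.

Lemma zmor_comp2 (a b c : C) : zmor b c ∘ zmor a b = zmor a c.
Proof. apply zmor_comp_l. Qed.

Lemma iso_regepi (a b c : C) (p : hom a b) (m : hom b c) :
  is_regular_epi p -> is_iso m -> is_regular_epi (m ∘ p).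
Proof.
  intros [z [f [g [Hc H]]]] [mi [Hl Hr]].
  exists z, f, g. split. { rewrite <- !comp_assoc, Hc. reflexivity. }
  intros d h Hh. destruct (H d h Hh) as [u [Hu U]].
  exists (u ∘ mi). split.
  { rewrite <- comp_assoc, (comp_assoc mi m p), Hl, comp_id_l. exact Hu. }
  intros u' Hu'. assert (u = u' ∘ m).
  { apply U. rewrite <- comp_assoc; exact Hu'. }
  subst u. rewrite <- comp_assoc, Hr, comp_id_r. reflexivity.
Qed.

Lemma mono_regepi_iso (a b c : C) (s : hom a b) (mu : hom b c) (l : hom a c) :
  is_mono mu -> is_regular_epi l -> mu ∘ s = l -> is_iso mu.
Proof.
  intros Hm [z [f [g [Hc H]]]] E.
  assert (Z : s ∘ f = s ∘ g).
  { apply Hm. rewrite !comp_assoc, E. exact Hc. }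
  destruct (H b s Z) as [t [Ht _]].
  assert (Z2 : l ∘ f = l ∘ g) by exact Hc.
  destruct (H c l Z2) as [u [_ U]].
  assert (E1 : mu ∘ t = idm c).
  { rewrite <- (U (mu ∘ t)), <- (U (idm c)); try reflexivity.
    - apply comp_id_l.
    - rewrite <- comp_assoc, Ht. exact E. }
  exists t. split; [|exact E1].
  apply Hm. rewrite comp_assoc, E1, comp_id_l, comp_id_r. reflexivity.
Qed.

Lemma iso_idm (a : C) : is_iso (idm a).
Proof. exists (idm a). split; apply comp_id_l. Qed.

Lemma zero_image (a b : C) : image_is_zero (zmor a b).
Proof.
  intros I q m [z [f [g [Hc H]]]] Hm E.
  assert (Eq : q = zmor a I).
  { apply Hm. rewrite E. symmetry. apply zmor_comp_l. }
  assert (Z : q ∘ f = q ∘ g) by exact Hc.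
  destruct (H I q Z) as [u [_ U]].
  assert (Id : idm I = zmor I I).
  { rewrite <- (U (idm I)), <- (U (zmor I I)); try reflexivity.
    - rewrite Eq. apply zmor_comp_l.
    - apply comp_id_l. }
  split.
  - intros c. exists (zmor c I). split; [trivial|]. intros f' _.
    rewrite <- (comp_id_l f'), Id. symmetry. apply zmor_comp_r.
  - intros c. exists (zmor I c). split; [trivial|]. intros f' _.
    rewrite <- (comp_id_r f'), Id. symmetry. apply zmor_comp_l.
Qed.

End Basics.

Section More.
Variable C : PCat.

Lemma pair_ext (t a b : C) (x y : hom t (prod a b)) :
  pr1 a b ∘ x = pr1 a b ∘ y -> pr2 a b ∘ x = pr2 a b ∘ y -> x = y.
Proof. intros E1 E2. rewrite (pair_uniq x), (pair_uniq y), E1, E2. reflexivity. Qed.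

Lemma copair_ext (a b t : C) (x y : hom (coprod a b) t) :
  x ∘ inl a b = y ∘ inl a b -> x ∘ inr a b = y ∘ inr a b -> x = y.
Proof. intros E1 E2. rewrite (copair_uniq x), (copair_uniq y), E1, E2. reflexivity. Qed.

Lemma lrw (a b c d : C) (f : hom b c) (g : hom a b) (h : hom a c) (x : hom c d) :
  f ∘ g = h -> x ∘ f ∘ g = x ∘ h.
Proof. intros E. rewrite <- comp_assoc, E. reflexivity. Qed.

Lemma comp_pair (s t a b : C) (f : hom t a) (g : hom t b) (h : hom s t) :
  pair f g ∘ h = pair (f ∘ h) (g ∘ h).
Proof. apply pair_ext; rewrite ?comp_assoc, ?pair_pr1, ?pair_pr2; reflexivity. Qed.

End More.

Section Reg.
Variable C : SemiAbelianCategory.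

Lemma pbs : has_pullbacks C.
Proof. destruct (sa_exact C) as [[H _] _]. exact H. Qed.

Lemma kp_coeq (a b R : C) (f : hom a b) (r1 r2 : hom R a) :
  is_kernel_pair f r1 r2 -> exists (c : C) (q : hom a c), is_coequalizer r1 r2 q.
Proof. destruct (sa_exact C) as [[_ [H _]] _]. apply H. Qed.

Lemma stab (a b c P : C) (f : hom a c) (g : hom b c) (p1 : hom P a) (p2 : hom P b) :
  is_pullback f g p1 p2 -> is_regular_epi g -> is_regular_epi p1.
Proof. destruct (sa_exact C) as [[_ [_ H]] _]. apply H. Qed.

Lemma image_fact (a b : C) (g : hom a b) :
  exists (I : C) (p : hom a I) (m : hom I b), is_regular_epi p /\ is_mono m /\ m ∘ p = g.
Proof.
  destruct (pbs g g) as [R [r1 [r2 HR]]].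
  destruct (kp_coeq HR) as [c [p Hp]].
  pose proof Hp as [Hc Hu].
  destruct (Hu b g (proj1 HR)) as [m [Hm _]].
  exists c, p, m. split; [exists R, r1, r2; exact Hp|]. split; [|exact Hm].
  intros Z x y Exy.
  destruct (pbs x p) as [Z1 [z1 [x1 H1]]].
  assert (R1 : is_regular_epi z1) by (eapply stab; [exact H1| exists R, r1, r2; exact Hp]).
  destruct (pbs (y ∘ z1) p) as [Z2 [z2 [y2 H2]]].
  assert (R2 : is_regular_epi z2) by (eapply stab; [exact H2| exists R, r1, r2; exact Hp]).
  assert (E : g ∘ (x1 ∘ z2) = g ∘ y2).
  { rewrite <- Hm. rewrite !comp_assoc. rewrite <- (comp_assoc m p x1).
    rewrite <- (proj1 H1). rewrite <- (comp_assoc m p y2), <- (proj1 H2).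
    rewrite !comp_assoc, Exy. reflexivity. }
  destruct (pb_lift HR E) as [t [Ht1 Ht2]].
  assert (E2 : x ∘ z1 ∘ z2 = y ∘ z1 ∘ z2).
  { rewrite (proj1 H1), <- comp_assoc, <- Ht1, comp_assoc, Hc, <- comp_assoc, Ht2.
    symmetry. exact (proj1 H2). }
  apply (regepi_epi R1). apply (regepi_epi R2). exact E2.
Qed.

Lemma regepi_cancel (a b c : C) (f : hom a b) (g : hom b c) :
  is_regular_epi (g ∘ f) -> is_regular_epi g.
Proof.
  intros H. destruct (image_fact g) as [I [p [m [Hp [Hm E]]]]].
  assert (Hi : is_iso m).
  { apply (mono_regepi_iso (s := p ∘ f) Hm H). rewrite comp_assoc, E. reflexivity. }
  rewrite <- E. apply iso_regepi; assumption.
Qed.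

Lemma ker_restr_regepi (K1 E1 K2 E2 Bs : C) (k1 : hom K1 E1) (d1 : hom E1 Bs)
  (k2 : hom K2 E2) (d2 : hom E2 Bs) (p : hom E1 E2) (pi : hom K1 K2) :
  is_kernel k1 d1 -> is_kernel k2 d2 -> d2 ∘ p = d1 -> k2 ∘ pi = p ∘ k1 ->
  is_regular_epi p -> is_regular_epi pi.
Proof.
  intros H1 H2 Ed Ek Hp. apply (stab (f := k2) (g := p) (p2 := k1)); [|exact Hp].
  split; [exact Ek|].
  intros Q q1 q2 Eq.
  assert (Z : d1 ∘ q2 = zmor Q Bs).
  { rewrite <- Ed, <- comp_assoc, <- Eq, comp_assoc, (kernel_zero H2). apply zmor_comp_r. }
  destruct H1 as [_ U1]. destruct (U1 Q q2 Z) as [h [Hh Uh]].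
  exists h. split.
  - split; [|exact Hh]. apply (kernel_mono H2). rewrite comp_assoc, Ek, <- comp_assoc, Hh.
    symmetry; exact Eq.
  - intros h' [_ Hh']. apply Uh. exact Hh'.
Qed.

Lemma split_five (K A B K' A' B' : C) (k : hom K A) (d : hom A B) (e : hom B A)
         (k' : hom K' A') (d' : hom A' B') (e' : hom B' A')
         (u : hom K K') (v : hom A A') (w : hom B B') :
    is_kernel k d -> d ∘ e = idm B ->
    is_kernel k' d' -> d' ∘ e' = idm B' ->
    v ∘ k = k' ∘ u -> d' ∘ v = w ∘ d -> v ∘ e = e' ∘ w ->
    is_iso u -> is_iso w -> is_iso v.
Proof. pose proof (@sa_protomodular C) as P. unfold is_protomodular in P.
  exact (P _ _ _ _ _ _ k d e k' d' e' u v w). Qed.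

End Reg.

Ltac la := repeat rewrite comp_assoc.

Section G.
Variable C : SemiAbelianCategory.

Lemma mapsout (B X A T : C) (xi : hom (flat B X) X) (k : hom X A) (d : hom A B) (e : hom B A)
  (h : hom (coprod B X) T) :
  is_kernel k d -> d ∘ e = idm B -> k ∘ xi = copair e k ∘ kappa B X ->
  h ∘ kappa B X = h ∘ inr B X ∘ xi ->
  exists c : hom A T, c ∘ copair e k = h.
Proof.
  intros Hk Hde Hxi Hh.
  destruct (image_fact (pair (copair e k) h)) as [R [p [m [Hp [Hm Eg]]]]].
  assert (Hq : d ∘ copair e k = proj_act B X).
  { rewrite comp_copair, Hde, (kernel_zero Hk). reflexivity. }
  assert (F2 : pr1 A T ∘ m ∘ p = copair e k).
  { rewrite <- comp_assoc, Eg, pair_pr1. reflexivity. }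
  assert (F3 : d ∘ (pr1 A T ∘ m) ∘ p = proj_act B X).
  { rewrite <- comp_assoc, F2. exact Hq. }
  set (dR := d ∘ (pr1 A T ∘ m)) in *.
  assert (Hpi : dR ∘ (p ∘ kappa B X) = from_zero B ∘ to_zero (flat B X)).
  { rewrite comp_assoc, F3. exact (kerm_zero (proj_act B X)). }
  set (pi := ker_lift Hpi).
  assert (Epi : kerm dR ∘ pi = p ∘ kappa B X) by apply ker_lift_spec.
  assert (Rpi : is_regular_epi pi).
  { apply (ker_restr_regepi (kerm_is_kernel (proj_act B X)) (kerm_is_kernel dR) F3 Epi Hp). }
  assert (Hu0 : d ∘ (pr1 A T ∘ m ∘ kerm dR) = zmor _ B).
  { rewrite comp_assoc. exact (kerm_zero dR). }
  destruct (kernel_lift Hk Hu0) as [u Hu].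
  assert (Hu'0 : dR ∘ (p ∘ inr B X) = from_zero B ∘ to_zero X).
  { rewrite comp_assoc, F3. exact (eta_ok B X). }
  set (u' := ker_lift Hu'0).
  assert (Eu' : kerm dR ∘ u' = p ∘ inr B X) by apply ker_lift_spec.
  assert (Eu : u ∘ pi = xi).
  { apply (kernel_mono Hk). rewrite comp_assoc, Hu, <- comp_assoc, Epi, comp_assoc, F2.
    symmetry; exact Hxi. }
  assert (Euu : u ∘ u' = idm X).
  { apply (kernel_mono Hk). rewrite comp_assoc, Hu, <- comp_assoc, Eu', comp_assoc, F2,
      copair_inr, comp_id_r. reflexivity. }
  assert (Key : m ∘ kerm dR = pair k (h ∘ inr B X) ∘ u).
  { apply (regepi_epi Rpi). rewrite <- comp_assoc, Epi, comp_assoc, Eg.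
    rewrite <- comp_assoc, Eu. apply pair_ext.
    - rewrite !comp_assoc, !pair_pr1. symmetry; exact Hxi.
    - rewrite !comp_assoc, !pair_pr2. exact Hh. }
  assert (Umono : is_mono u).
  { intros t x y E. apply kerm_mono. apply Hm. rewrite !comp_assoc, Key, <- !comp_assoc, E.
    reflexivity. }
  assert (Uiso : is_iso u).
  { exists u'. split; [|exact Euu]. apply Umono. rewrite comp_assoc, Euu, comp_id_l, comp_id_r.
    reflexivity. }
  assert (Iso : is_iso (pr1 A T ∘ m)).
  { apply (split_five (k := kerm dR) (d := dR) (e := p ∘ inl B X) (k' := k) (d' := d) (e' := e)
      (u := u) (w := idm B)).
    - apply kerm_is_kernel.
    - rewrite comp_assoc, F3. unfold proj_act. apply copair_inl.
    - exact Hk.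
    - exact Hde.
    - symmetry; exact Hu.
    - rewrite comp_id_l. reflexivity.
    - rewrite comp_assoc, F2, copair_inl, comp_id_r. reflexivity.
    - exact Uiso.
    - apply iso_idm. }
  destruct Iso as [ri [Hl Hr]].
  exists (pr2 A T ∘ m ∘ ri).
  rewrite <- F2, <- (comp_assoc (pr2 A T ∘ m) ri), (comp_assoc ri), Hl, comp_id_l.
  rewrite <- comp_assoc, Eg, pair_pr2. reflexivity.
Qed.

End G.

Section ML.
Variable C : SemiAbelianCategory.

Lemma mono_lemma (M Q Y : C) (mu : hom M Q) (r : hom Q Y) (t : hom (ker r) M) :
  is_mono mu -> is_regular_epi (r ∘ mu) -> mu ∘ t = kerm r -> is_iso mu.
Proof.
  intros Hmu Hs Ht.
  set (s := r ∘ mu) in *.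
  destruct (pbs r s) as [L [l2 [l1 HL]]].
  assert (Rl2 : is_regular_epi l2) by exact (stab HL Hs).
  destruct (pbs s s) as [M' [a1 [a2 HM]]].
  destruct (pb_lift (q1 := idm M) (q2 := idm M) HM eq_refl) as [sg1 [S11 S12]].
  assert (E2 : r ∘ mu = s ∘ idm M) by (rewrite comp_id_r; reflexivity).
  destruct (pb_lift HL E2) as [sg2 [S21 S22]].
  assert (E3 : r ∘ (mu ∘ a2) = s ∘ a1).
  { rewrite comp_assoc. exact (eq_sym (proj1 HM)). }
  destruct (pb_lift HL E3) as [v [V1 V2]].
  assert (Z1 : l1 ∘ (v ∘ kerm a1) = zmor _ M).
  { rewrite comp_assoc, V2. exact (kerm_zero a1). }
  destruct (kernel_lift (kerm_is_kernel l1) Z1) as [u Hu].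
  assert (Z2 : r ∘ (l2 ∘ kerm l1) = zmor _ Y).
  { rewrite comp_assoc, (proj1 HL), <- comp_assoc, (kerm_zero l1). apply zmor_comp_l. }
  destruct (kernel_lift (kerm_is_kernel r) Z2) as [z Hz].
  assert (E4 : s ∘ zmor (ker l1) M = s ∘ (t ∘ z)).
  { rewrite zmor_comp_l. unfold s. rewrite comp_assoc, <- (comp_assoc r mu t), Ht,
      (kerm_zero r). symmetry. apply zmor_comp_r. }
  destruct (pb_lift HM E4) as [y [Y1 Y2]].
  assert (Z3 : a1 ∘ y = zmor _ M) by exact Y1.
  destruct (kernel_lift (kerm_is_kernel a1) Z3) as [u' Hu'].
  assert (Evy : v ∘ y = kerm l1).
  { apply (pb_uniq HL).
    - rewrite comp_assoc, V1, <- comp_assoc, Y2, comp_assoc, Ht. exact Hz.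
    - rewrite comp_assoc, V2, Y1. symmetry. exact (kerm_zero l1). }
  assert (Uiso : is_iso u).
  { exists u'. split.
    - apply kerm_mono. rewrite comp_assoc, Hu', comp_id_r.
      apply (pb_uniq HM).
      + rewrite comp_assoc, Y1, zmor_comp_r. symmetry. exact (kerm_zero a1).
      + rewrite comp_assoc, Y2. apply Hmu. rewrite !comp_assoc, Ht, Hz.
        rewrite <- comp_assoc, Hu, comp_assoc, V1. reflexivity.
    - apply kerm_mono. rewrite comp_assoc, Hu, <- comp_assoc, Hu', Evy, comp_id_r.
      reflexivity. }
  assert (Viso : is_iso v).
  { apply (split_five (k := kerm a1) (d := a1) (e := sg1) (k' := kerm l1) (d' := l1)
      (e' := sg2) (u := u) (w := idm M)).
    - apply kerm_is_kernel.
    - exact S11.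
    - apply kerm_is_kernel.
    - exact S22.
    - symmetry; exact Hu.
    - rewrite comp_id_l; exact V2.
    - rewrite comp_id_r. apply (pb_uniq HL).
      + rewrite comp_assoc, V1, <- comp_assoc, S12, comp_id_r. symmetry; exact S21.
      + rewrite comp_assoc, V2, S11, S22. reflexivity.
    - exact Uiso.
    - apply iso_idm. }
  destruct Viso as [vi [Vl Vr]].
  apply (mono_regepi_iso (s := a2 ∘ vi) Hmu Rl2).
  rewrite comp_assoc, <- V1, <- comp_assoc, Vr, comp_id_r. reflexivity.
Qed.

End ML.

Section Main.
Variable C : SemiAbelianCategory.

Lemma flat_map_spec (B B' X X' : C) (g : hom B B') (f : hom X X') :
  kappa B' X' ∘ flat_map g f = coprod_map g f ∘ kappa B X.
Proof. unfold flat_map, kappa. apply ker_lift_spec. Qed.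

Lemma coprod_map_regepi (X B Y : C) (q : hom X B) :
  is_regular_epi q -> is_regular_epi (coprod_map q (idm Y)).
Proof.
  intros [Z [a [b [Hc H]]]].
  exists (coprod Z Y), (coprod_map a (idm Y)), (coprod_map b (idm Y)). split.
  { unfold coprod_map at 1 3. rewrite !copair_comp_map, <- !comp_assoc, Hc. reflexivity. }
  intros T h Hh.
  assert (Ha : (h ∘ inl X Y) ∘ a = (h ∘ inl X Y) ∘ b).
  { assert (E := f_equal (fun x => x ∘ inl Z Y) Hh). simpl in E.
    unfold coprod_map in E. rewrite <- !comp_assoc, !copair_inl, !comp_assoc in E. exact E. }
  destruct (H T _ Ha) as [u [Hu U]].
  exists (copair u (h ∘ inr X Y)). split.
  { rewrite copair_comp_map, Hu, comp_id_r. symmetry. apply copair_uniq. }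
  intros v Hv. apply copair_ext.
  - rewrite copair_inl. apply U. rewrite <- Hv. unfold coprod_map.
    rewrite <- !comp_assoc, copair_inl. reflexivity.
  - rewrite copair_inr, <- Hv. unfold coprod_map.
    rewrite <- !comp_assoc, copair_inr, comp_id_r. reflexivity.
Qed.

Lemma conj_kernel (X : C) : is_kernel (conj_k X) (pr2 X X).
Proof.
  unfold conj_k. split. { apply pair_pr2. }
  intros t g Hg. exists (pr1 X X ∘ g). split.
  - apply pair_ext.
    + rewrite comp_assoc, pair_pr1, comp_id_l. reflexivity.
    + rewrite comp_assoc, pair_pr2, Hg. apply zmor_comp_r.
  - intros h' Hh'. rewrite <- Hh', comp_assoc, pair_pr1, comp_id_l. reflexivity.
Qed.

Lemma conj_sdp (X : C) :
  conj_k X ∘ chi X = copair (conj_e X) (conj_k X) ∘ kappa X X.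
Proof.
  unfold chi, conj_k, conj_e. apply pair_ext.
  - rewrite !comp_assoc, pair_pr1, comp_id_l, comp_copair, !pair_pr1. reflexivity.
  - rewrite !comp_assoc, pair_pr2, !zmor_comp_r, comp_copair, !pair_pr2.
    change (copair (idm X) (zmor X X)) with (proj_act X X). unfold kappa.
    symmetry. exact (kerm_zero (proj_act X X)).
Qed.

Theorem main (B X : C)
  (partial : hom X B) (xi : hom (flat B X) X) :
  is_regular_epi partial ->
  is_internal_action xi ->
  xi ∘ flat_map partial (idm X) = chi X ->
  forall (A : C) (k : hom X A) (d : hom A B) (e : hom B A),
    is_semidirect_product xi k d e ->
    commutator_zero k e partial (idm B) /\
    commutator_zero (conj_k X) (conj_e X) k (e ∘ partial) /\
    is_precrossed_module partial k e /\
    partial ∘ xi = chi B ∘ flat_map (idm B) partial.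
Proof.
  intros Hp _ Hchi A k d e [Hk [Hde Hxi]].
  assert (Hh1 : copair (e ∘ partial) k ∘ kappa X X = copair (e ∘ partial) k ∘ inr X X ∘ chi X).
  { rewrite copair_inr, <- Hchi, comp_assoc, Hxi, <- comp_assoc, flat_map_spec,
      comp_assoc, copair_comp_map, comp_id_r. reflexivity. }
  assert (Hpr : pr2 X X ∘ conj_e X = idm X) by (unfold conj_e; apply pair_pr2).
  destruct (mapsout (conj_kernel X) Hpr (conj_sdp X) Hh1) as [f Hf].
  assert (Peif : commutator_zero (conj_k X) (conj_e X) k (e ∘ partial)).
  { unfold commutator_zero.
    assert (E : copair k (e ∘ partial) = f ∘ copair (conj_k X) (conj_e X)).
    { apply copair_ext; rewrite <- comp_assoc, ?copair_inl, ?copair_inr.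
      - assert (E := f_equal (fun x => x ∘ inr X X) Hf). simpl in E.
        rewrite <- comp_assoc, !copair_inr in E. symmetry; exact E.
      - assert (E := f_equal (fun x => x ∘ inl X X) Hf). simpl in E.
        rewrite <- comp_assoc, !copair_inl in E. symmetry; exact E. }
    rewrite E, <- comp_assoc, (kerm_zero (copair (conj_k X) (conj_e X))).
    fold (zmor (ker (copair (conj_k X) (conj_e X))) (prod X X)).
    rewrite zmor_comp_l. apply zero_image. }
  destruct (pbs (proj_act B X) partial) as [Q [r [p2 HQ]]].
  assert (Ej : proj_act B X ∘ coprod_map partial (idm X) = partial ∘ proj_act X X).
  { unfold proj_act. rewrite copair_comp_map, comp_copair, !comp_id_l, !comp_id_r,
      ?zmor_comp_l, ?zmor_comp_r. reflexivity. }
  destruct (pb_lift HQ Ej) as [j [J1 J2]].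
  assert (Rj : is_regular_epi j).
  { destruct (image_fact j) as [M [j' [mu [Hj' [Hmu Emu]]]]].
    assert (Hs : is_regular_epi (r ∘ mu)).
    { apply (regepi_cancel (f := j')). rewrite <- comp_assoc, Emu, J1.
      apply coprod_map_regepi; exact Hp. }
    assert (Ht : mu ∘ (j' ∘ inl X X ∘ (p2 ∘ kerm r)) = kerm r).
    { apply (pb_uniq HQ).
      - rewrite !comp_assoc, <- (comp_assoc r mu j'), Emu, J1. unfold coprod_map at 1. rewrite copair_inl.
        rewrite <- (comp_assoc (inl B X) partial p2), <- (proj1 HQ).
        rewrite <- comp_assoc, <- comp_assoc, (kerm_zero r).
        fold (zmor (ker r) (coprod B X)). rewrite !zmor_comp_l. reflexivity.
      - rewrite !comp_assoc, <- (comp_assoc p2 mu j'), Emu, J2. unfold proj_act at 1. rewrite copair_inl, comp_id_l.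
        reflexivity. }
    assert (Iso := mono_lemma Hmu Hs Ht).
    rewrite <- Emu. apply iso_regepi; assumption. }
  assert (Ei : proj_act B X ∘ kappa B X = partial ∘ zmor (flat B X) X).
  { rewrite zmor_comp_l. exact (kerm_zero (proj_act B X)). }
  destruct (pb_lift HQ Ei) as [iota [I1 I2]].
  assert (Kiota : is_kernel iota p2).
  { split. { exact I2. }
    intros t g Hg.
    assert (Z : proj_act B X ∘ (r ∘ g) = zmor t B).
    { rewrite comp_assoc, (proj1 HQ), <- comp_assoc, Hg. apply zmor_comp_l. }
    destruct (kernel_lift (kerm_is_kernel (proj_act B X)) Z) as [w Hw].
    exists w. split.
    - apply (pb_uniq HQ).
      + rewrite comp_assoc, I1. exact Hw.
      + rewrite comp_assoc, I2, Hg. apply zmor_comp_r.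
    - intros w' Hw'. apply (kernel_mono (kerm_is_kernel (proj_act B X))).
      unfold kappa in Hw. rewrite Hw, <- Hw', comp_assoc, I1. reflexivity. }
  assert (Epi : iota ∘ flat_map partial (idm X) = j ∘ kappa X X).
  { apply (pb_uniq HQ).
    - rewrite !comp_assoc, I1, J1. apply flat_map_spec.
    - rewrite !comp_assoc, I2, J2, zmor_comp_r. unfold kappa.
      symmetry. exact (kerm_zero (proj_act X X)). }
  assert (Rf : is_regular_epi (flat_map partial (idm X))).
  { apply (ker_restr_regepi (kerm_is_kernel (proj_act X X)) Kiota J2 Epi Rj). }
  assert (E4 : copair (idm B) partial ∘ kappa B X = partial ∘ xi).
  { apply (regepi_epi Rf).
    rewrite <- comp_assoc, flat_map_spec, comp_assoc, copair_comp_map, comp_id_l, comp_id_r.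
    rewrite <- comp_assoc, Hchi. unfold chi. rewrite comp_assoc, comp_copair, comp_id_r.
    reflexivity. }
  assert (Hh2 : copair (idm B) partial ∘ kappa B X = copair (idm B) partial ∘ inr B X ∘ xi).
  { rewrite copair_inr. exact E4. }
  destruct (mapsout Hk Hde Hxi Hh2) as [c Hc].
  assert (Ce : c ∘ e = idm B).
  { assert (E := f_equal (fun x => x ∘ inl B X) Hc). simpl in E.
    rewrite <- comp_assoc, !copair_inl in E. exact E. }
  assert (Ck : c ∘ k = partial).
  { assert (E := f_equal (fun x => x ∘ inr B X) Hc). simpl in E.
    rewrite <- comp_assoc, !copair_inr in E. exact E. }
  split; [|split; [exact Peif|split]].
  - unfold commutator_zero.
    assert (E : copair partial (idm B) = c ∘ copair k e).
    { rewrite comp_copair, Ce, Ck. reflexivity. }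
    rewrite E, <- comp_assoc, (kerm_zero (copair k e)).
    fold (zmor (ker (copair k e)) A). rewrite zmor_comp_l. apply zero_image.
  - exists c. split; assumption.
  - unfold chi. rewrite <- comp_assoc, flat_map_spec, comp_assoc, copair_comp_map,
      !comp_id_l. symmetry. exact E4.
Qed.

End Main.

Unset Implicit Arguments.

Theorem mainTheorem13 (C : SemiAbelianCategory) (B X : C)
  (partial : hom X B) (xi : hom (flat B X) X) :
  is_regular_epi partial ->
  is_internal_action xi ->
  xi ∘ flat_map partial (idm X) = chi X ->
  forall (A : C) (k : hom X A) (d : hom A B) (e : hom B A),
    is_semidirect_product xi k d e ->
    (* Precrossed Module Condition [partial, 1_B]_xi = 0 *)
    commutator_zero k e partial (idm B) /\
    (* Peiffer Condition [k, e ∘ partial]_{chi_X} = 0 *)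
    commutator_zero (conj_k X) (conj_e X) k (e ∘ partial) /\
    is_precrossed_module partial k e /\
    partial ∘ xi = chi B ∘ flat_map (idm B) partial.
Proof.
  exact (@main C B X partial xi).
Qed.
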